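(* Let $j_0\geq 0$ be a real number and $n\in\mathbb{N}$. Consider the directed graph with initial node $(0,j_0)$ in which, from each node $(m,j_m)$ with $0\leq m<n$, there are exactly two edges: one ''up'' edge to $(m+1,j_m+1)$ and one ''down'' edge to $(m+1,\max(j_m-1,0))$. For real $j$ and integer $k$, let $\Lambda^{j_0}_{j,k,n}$ denote the number of paths from $(0,j_0)$ to the node $(n,j)$ that have exactly $k$ up jumps. Then \[ \Lambda^{j_0}_{j,k,n} = \begin{cases} \binom{n}{k}, &\text{if } j=j_0+2k-n \text{ and } n-\lfloor j_0\rfloor\leq k\leq n,\\[1mm] \binom{n}{k}-\binom{n}{k+\lfloor j_0\rfloor+1}, &\text{if } j=j_0+2k-n \text{ and } n-\lfloor\frac{n+j_0}{2}\rfloor\leq k\leq n-\lfloor j_0\rfloor-1,\\[1mm] \binom{n}{k-j}-\binom{n}{k-j-1}, &\text{if } 0\leq j\leq n-\lfloor j_0\rfloor-1 \text{ (with } j \text{ an integer) and } j\leq k\leq \lfloor\frac{n-\lfloor j_0\rfloor-1+j}{2}\rfloor, \end{cases} \] and all other values of $\Lambda^{j_0}_{j,k,n}$ are zero.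
   Context: $\lfloor x\rfloor$ denotes the integer part of $x$. Binomial coefficients $\binom{n}{i}$ are taken to be $0$ when $i<0$ or $i>n$. *)

(* Defs.v *)
From HB Require Import structures.
From mathcomp Require Import all_boot all_order all_algebra.
From mathcomp Require Import reals.
Set Implicit Arguments. Unset Strict Implicit. Unset Printing Implicit Defensive.
Import Order.TTheory GRing.Theory Num.Theory.
Local Open Scope ring_scope.

Definition binomZ (n : nat) (i : int) : int :=
  match i with
  | Posz m => ('C(n, m))%:Z
  | Negz _ => 0
  end.

Definition step {R : realType} (j : R) (b : bool) : R :=
  if b then j + 1 else Num.max (j - 1) 0.

Definition endpos {R : realType} (j0 : R) (s : seq bool) : R := foldl step j0 s.

(* A path of length n from (0,j0) is determined by its sequence of n edge
   choices (up = true / down = false); the two out-edges of each node are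
   distinct edges. *)
Definition Lambda {R : realType} (j0 j : R) (k : int) (n : nat) : nat :=
  #|[set s : n.-tuple bool |
       ((count id s)%:Z == k) && (endpos j0 (tval s) == j)]|.

(* Main.v *)
Require Import Defs.
From HB Require Import structures.
From mathcomp Require Import all_boot all_order all_algebra.
From mathcomp Require Import reals zify lra.
Import Order.TTheory GRing.Theory Num.Theory.
Local Open Scope ring_scope.

Lemma card_cons n (P : pred (n.+1.-tuple bool)) :
  #|[set t | P t]| = (#|[set t : n.-tuple bool | P [tuple of true :: t]]|
     + #|[set t : n.-tuple bool | P [tuple of false :: t]]|)%N.
Proof.
rewrite -!sum1dep_card.
pose f (p : bool * n.-tuple bool) : n.+1.-tuple bool := [tuple of p.1 :: p.2].
pose g (t : n.+1.-tuple bool) := (thead t, [tuple of behead t]).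
have fK : cancel f g by case=> b t; rewrite /f /g theadE; congr pair; apply: val_inj.
have gK : cancel g f by move=> t; rewrite /f /g /= [RHS]tuple_eta.
rewrite (reindex f); last by exists g => x _ ; [apply: fK | apply: gK].
rewrite -(pair_big_dep xpredT (fun (b : bool) (t : n.-tuple bool) => P [tuple of b :: t]) (fun _ _ => 1%N)) /=.
by rewrite big_bool /= addnC.
Qed.

Definition ev (b : bool) : int := if b then 1 else -1.
Fixpoint U (s : seq bool) : int := if s is b :: s' then ev b + U s' else 0.
Fixpoint mp (s : seq bool) : int :=
  if s is b :: s' then Num.min 0 (ev b + mp s') else 0.

Lemma U_count s : U s = 2 * (count id s)%:Z - (size s)%:Z.
Proof. elim: s => [|b s IH] //=; rewrite IH; case: b => /=; lia. Qed.


Lemma mp_props s : [/\ mp s <= 0, mp s <= U s & (count id s)%:Z - (size s)%:Z <= mp s].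
Proof.
elim: s => [|b s [H1 H2 H3]] //=.
rewrite !le_min ge_min; case: b => /=; split; lia.
Qed.

Lemma endposE (R : realType) (j0 : R) s : 0 <= j0 ->
  endpos j0 s = Num.max (j0 + (U s)%:~R) ((U s - mp s)%:~R).
Proof.
elim: s j0 => [|b s IH] j0 hj0 /=.
  by rewrite /endpos /= addr0 subr0 (max_idPl hj0).
rewrite /endpos /= -/(endpos _ _) IH; last first.
  by case: b; rewrite /step /=; [lra | rewrite le_max lexx orbT].
have [H1 H2 _] := mp_props s.
have h1 : ((mp s)%:~R : R) <= 0 by rewrite lerz0.
move: (U s) (mp s) H1 H2 h1 => u m H1 H2 h1.
have h2 : (m%:~R : R) <= u%:~R by rewrite ler_int.
case: b => /=; rewrite /step /=.
- case: (leP 0 (1 + m)) => hm; rewrite -?(ler_int R) -?(ltr_int R) in hm;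
  rewrite ?rmorphD ?rmorphB ?rmorphN ?rmorph1 ?rmorph0 ?oppr0 ?addr0 /= in hm *;
  rewrite /Num.max; repeat case: ifP => ?; try lra.
- have hm2 : (0 < -1 + m) = false by lia. rewrite /Num.min hm2.
  have -> : Num.max (j0 - 1) 0 = if j0 <= 1 then 0 else j0 - 1.
    by rewrite /Num.max; do 2 case: ifP => ?; lra.
  rewrite ?(intrD, intrN, intrB) /=.
  case: ifP => ?; rewrite /Num.max; repeat case: ifP => ?; try lra.
Qed.

Lemma binomZS n i : binomZ n.+1 i = binomZ n i + binomZ n (i - 1).
Proof.
case: i => [[|m]|m] /=.
- by rewrite !bin0.
- by rewrite subSS subn0 binS PoszD.
- by [].
Qed.

Lemma binomZ0 (i : int) : binomZ 0 i = (i == 0)%:Z.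
Proof. by case: i => [[|m]|m]. Qed.

Lemma binomZ_sym n (i : int) : binomZ n (n%:Z - i) = binomZ n i.
Proof.
case: i => [m|m].
- have [hm|hm] := leqP m n.
  + have -> : n%:Z - m%:Z = (n - m)%N by lia.
    by rewrite /= bin_sub.
  + have [p ->] : exists p, n%:Z - m%:Z = Negz p by exists (m - n).-1; lia.
    by rewrite /= bin_small.
- have -> : n%:Z - Negz m = (n + m.+1)%N by lia.
  by rewrite /= bin_small //; lia.
Qed.

Definition Nset n (k : int) (c : nat) :=
  [set s : n.-tuple bool | ((count id s)%:Z == k) && (- c%:Z <= mp s)].

Lemma Ncount n : forall (k : int) (c : nat), n%:Z <= 2 * k + c%:Z + 1 ->
  (#|Nset n k c|)%:Z = binomZ n k - binomZ n (k + c%:Z + 1).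
Proof.
elim: n => [|n IH] k c hn.
  rewrite /Nset !binomZ0.
  rewrite (_ : [set s : 0.-tuple bool | _] = if k == 0 then setT else set0).
    by case: eqP => hk; rewrite ?cardsT ?cards0 ?card_tuple ?expn0; case: eqP => h /=; lia.
  apply/setP => t; rewrite tuple0 !inE /=; case: ifP => h; rewrite !inE /=; lia.
rewrite /Nset card_cons.
rewrite (_ : [set t : n.-tuple bool | _] = Nset n (k - 1) c.+1); last first.
  apply/setP => t; rewrite !inE /= le_min; apply/andP/andP; case; move/eqP=> h1 h2;
   split; try apply/eqP; lia.
case: c hn => [|c] hn.
- rewrite (_ : [set t : n.-tuple bool | _] = set0); last first.
    apply/setP => t; rewrite !inE /= le_min; have [H _ _] := mp_props (@tval n bool t).
    by apply/negbTE; apply/negP => /and3P [_ _ h]; lia.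
  rewrite cards0 addn0 IH; last lia.
  rewrite !binomZS.
  rewrite (_ : k - 1 + 1%:Z + 1 = k + 1); last lia.
  rewrite (_ : k + 0%:Z + 1 = k + 1); last lia.
  rewrite (_ : k + 1 - 1 = k); last lia.
  lia.
- rewrite (_ : [set t : n.-tuple bool | _] = Nset n k c); last first.
    apply/setP => t; rewrite !inE /= le_min; apply/andP/andP; case; move/eqP=> h1 h2;
     split; try apply/eqP; lia.
  rewrite PoszD !IH; try lia.
  rewrite !binomZS.
  rewrite (_ : k - 1 + c.+2%:Z + 1 = k + c.+1%:Z + 1); last lia.
  rewrite (_ : k + c%:Z + 1 = k + c.+1%:Z + 1 - 1); last lia.
  lia.
Qed.

Lemma LamE (R : realType) (j0 j : R) k n : 0 <= j0 ->
  Lambda j0 j k n = #|[set s : n.-tuple bool | ((count id s)%:Z == k) &&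
     (Num.max (j0 + (2 * k - n%:Z)%:~R) ((2 * k - n%:Z - mp s)%:~R) == j)]|.
Proof.
move=> hj0; rewrite /Lambda; apply: eq_card => s; rewrite !inE endposE //.
case: eqP => //= <-; rewrite U_count size_tuple //.
Qed.

Lemma binomZ_out n (i : int) : (i < 0) || (n%:Z < i) -> binomZ n i = 0.
Proof. case: i => [m|m] //= h; rewrite bin_small //; lia. Qed.

Lemma max_eq_gt (R : realType) (x y w : R) : x < w -> (Num.max x y == w) = (y == w).
Proof. by move=> h; rewrite /Num.max; case: ifP => h2 //; apply/idP/idP => /eqP; lra. Qed.

Lemma max_eqr_l (R : realType) (x y : R) : (Num.max x y == x) = (y <= x).
Proof. by rewrite /Num.max; case: ifP => h; apply/idP/idP => [/eqP|]; lra. Qed.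

Theorem lemma2p1 (R : realType) (j0 : R) (n : nat) (hj0 : 0 <= j0)
    (j : R) (k : int) :
  let fj0 := Num.floor j0 in
  let case1 := j = j0 + 2 * k%:~R - n%:R /\ (n%:Z - fj0 <= k <= n%:Z) in
  let case2 := j = j0 + 2 * k%:~R - n%:R /\
      (n%:Z - Num.floor ((n%:R + j0) / 2) <= k <= n%:Z - fj0 - 1) in
  let case3 := fun z : int => j = z%:~R /\ (0 <= z <= n%:Z - fj0 - 1) /\
      (z <= k <= Num.floor ((n%:Z - fj0 - 1 + z)%:~R / 2 : R)) in
  [/\ case1 -> (Lambda j0 j k n)%:Z = binomZ n k,
      case2 -> (Lambda j0 j k n)%:Z = binomZ n k - binomZ n (k + fj0 + 1),
      forall z : int, case3 z ->
        (Lambda j0 j k n)%:Z = binomZ n (k - z) - binomZ n (k - z - 1)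
    & ~ case1 -> ~ case2 -> ~ (exists z : int, case3 z) ->
        Lambda j0 j k n = 0%N].
Proof.
move=> fj0 case1 case2 case3.
have hfle : fj0%:~R <= j0 := floor_le j0.
have hflt : j0 < (fj0 + 1)%:~R := floorD1_gt j0.
have hf0 : 0 <= fj0 by rewrite floor_ge0.
have [f hf] : exists f : nat, fj0 = f%:Z.
  by move: hf0; case: (fj0) => [m|m] // _; exists m.
rewrite hf in hfle hflt; rewrite intrD -pmulrn in hflt; rewrite -pmulrn in hfle.
rewrite LamE //.
set a := 2 * k - n%:Z.
have ha : (a%:~R : R) = 2 * k%:~R - n%:R by rewrite /a intrB intrM -!pmulrn.
have Eun : j = j0 + 2 * k%:~R - n%:R ->
  [set s : n.-tuple bool | ((count id s)%:Z == k) &&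
     (Num.max (j0 + a%:~R) ((a - mp s)%:~R) == j)] = Nset n k f.
  move=> ->; apply/setP => s; rewrite !inE.
  have -> : j0 + 2*k%:~R - n%:R = j0 + a%:~R by rewrite ha addrA.
  rewrite max_eqr_l; congr (_ && _).
  rewrite intrB (_ : (a%:~R - (mp s)%:~R <= j0 + a%:~R) = ((- mp s)%:~R <= j0)); last first.
    by rewrite intrN; apply/idP/idP; lra.
  rewrite -floor_ge_int -/fj0 hf; set m := mp (@tval n bool s); apply/idP/idP; lia.
split.
- case=> hj hk; rewrite hf in hk; rewrite (Eun hj).
  have [kneg|kpos] := ltP k 0.
  + rewrite binomZ_out ?kneg // (_ : Nset n k f = set0) ?cards0 //.
    apply/setP => s; rewrite !inE; apply/negbTE/negP => /andP[/eqP h _]; lia.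
  + rewrite (_ : Nset n k f = Nset n k n); last first.
      apply/setP => s; rewrite !inE; have [_ _ H3] := mp_props (tval s).
      rewrite size_tuple in H3; set m := mp (@tval n bool s) in H3 *; set c := count id (@tval n bool s) in H3 *.
      apply/andP/andP; case=> /eqP h1 h2; split; try apply/eqP; lia.
    rewrite Ncount; last lia.
    rewrite (@binomZ_out n (k + n%:Z + 1)) ?subr0 //; lia.
- case=> hj hk; rewrite hf in hk *; rewrite (Eun hj) Ncount //.
  move: hk => /andP [hk1 hk2].
  have : n%:Z - k <= Num.floor ((n%:R + j0)/2) by lia.
  rewrite floor_ge_int intrB -pmulrn => hr.
  have : ((n%:Z - k - k - f%:Z - 1)%:~R : R) < 0.
    by rewrite !intrB -!pmulrn; lra.
  rewrite ltrz0; lia.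
- move=> z [hj [hz1 hz2]]; rewrite hf in hz1 hz2 *.
  move: hz2 => /andP [hzk]; rewrite floor_ge_int => hkf.
  have : ((k + k - (n%:Z - f%:Z - 1 + z))%:~R : R) <= 0.
    by rewrite intrB [(k + k)%:~R]intrD; lra.
  rewrite lerz0 => h2k.
  have hz : j0 + a%:~R < z%:~R.
    have : ((f%:Z + 1 - (z - a))%:~R : R) <= 0 by rewrite lerz0; lia.
    by rewrite !intrB intrD -pmulrn; lra.
  have [c hc] : exists c : nat, (z - a)%R = Posz c.+1.
    by exists (absz (z - a - 1)%R); lia.
  set A := Nset n k c.+1.
  set B := [set s : n.-tuple bool | - c%:Z <= mp s].
  have E1 : A :&: B = Nset n k c.
    apply/setP => s; rewrite !inE; set m := mp (@tval n bool s).
    rewrite -andbA; congr (_ && _); apply/idP/idP; [case/andP|move=> h; apply/andP; split]; lia.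
  rewrite (_ : [set s : n.-tuple bool | _] = A :\: B); last first.
    apply/setP => s; rewrite !inE hj max_eq_gt // eqr_int; set m := mp (@tval n bool s).
    case: ((count id s)%:Z == k); rewrite /= ?andbF ?andbT //; apply/idP/idP; lia.
  have := cardsID B A; rewrite E1 => hc2.
  have -> : #|A :\: B|%:Z = #|A|%:Z - #|Nset n k c|%:Z by rewrite -hc2 PoszD; lia.
  rewrite /A !Ncount; try lia.
  rewrite -(binomZ_sym n (k - z)) -(binomZ_sym n (k - z - 1)).
  rewrite (_ : n%:Z - (k - z) = k + c.+1%:Z); last lia.
  rewrite (_ : n%:Z - (k - z - 1) = k + c.+1%:Z + 1); last lia.
  rewrite (_ : k + c%:Z + 1 = k + c.+1%:Z); last lia.
  lia.
- move=> n1 n2 n3; apply/eqP; rewrite cards_eq0; apply/eqP/setP => s; rewrite !inE.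
  apply/negbTE/negP => /andP [/eqP hc /eqP hj].
  have [H1 H2 H3] := mp_props (tval s).
  have hcn := count_size id (tval s).
  rewrite U_count size_tuple in H2; rewrite size_tuple in H3 hcn.
  set m := mp (@tval n bool s) in H1 H2 H3 hj.
  set cc := count id (@tval n bool s) in hc H2 H3 hcn.
  have [hle|hgt] := lerP ((a - m)%:~R : R) (j0 + a%:~R).
  + have ej : j = j0 + a%:~R by rewrite -hj; apply/eqP; rewrite max_eqr_l.
    have : (0 : R) <= (a - m)%:~R by rewrite ler0z; lia.
    move=> ham.
    have ha0 : 0 <= j0 + a%:~R by lra.
    case: (leP (n%:Z - f%:Z) k) => hkk.
    * by apply: n1; split; [rewrite ej ha addrA | rewrite hf; apply/andP; split; lia].
    * apply: n2; split; first by rewrite ej ha addrA.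
      rewrite hf; apply/andP; split; last lia.
      have : n%:Z - k <= Num.floor ((n%:R + j0)/2).
        by rewrite floor_ge_int intrB -pmulrn; rewrite ha in ha0; lra.
      lia.
  + have ej : j = (a - m)%:~R by rewrite -hj /Num.max hgt.
    apply: n3; exists (a - m); split; first done.
    have : ~~ ((- m)%:~R <= j0).
      by rewrite -ltNge; rewrite intrB in hgt; rewrite intrN; lra.
    rewrite -floor_ge_int -/fj0 hf => hmf.
      split; [apply/andP; split; lia | apply/andP; split; first lia].
    rewrite floor_ge_int.
    have : ((k + k - (n%:Z - f%:Z - 1 + (a - m)))%:~R : R) <= 0 by rewrite lerz0; lia.
    rewrite intrB [(k + k)%:~R]intrD; lra.
Qed.
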